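(* A finitely generated group $G$ admits a transitive translation-like action by $\mathbb{Z}$ if and only if $G$ has a Cayley graph admitting a bi-infinite Hamiltonian path.
   Context: A finitely generated group $G$ is given the word metric $d_S(g,h)=\min\{n : g^{-1}h\in (S\cup S^{-1})^n\}$ for a finite generating set $S$; all such metrics are bilipschitz equivalent, so the notion below does not depend on $S$. For a group $H$ and a metric space $(X,d)$, a right action $*$ of $H$ on $X$ is translation-like if it is free ($x*h=x$ implies $h=1_H$) and for every $h\in H$ the set $\{d(x,x*h): x\in X\}$ is bounded. A Cayley graph of $G$ means $\mathrm{Cay}(G;S)$ for a finite generating set $S$: vertex set $G$, with $g$ adjacent to $gs$ for $s\in S\cup S^{-1}$. A bi-infinite Hamiltonian path is a bijection $P:\mathbb{Z}\to V$ onto the vertex set with $P(i)$ adjacent to $P(i+1)$ for all $i$. *)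

(* Defs.v *)
From Stdlib Require Import ZArith List.
Import ListNotations.
Set Implicit Arguments.

Definition is_group (G : Type) (mul : G -> G -> G) (e : G) (inv : G -> G) : Prop :=
  (forall x y z, mul x (mul y z) = mul (mul x y) z) /\
  (forall x, mul e x = x) /\ (forall x, mul x e = x) /\
  (forall x, mul (inv x) x = e) /\ (forall x, mul x (inv x) = e).

Section Group.
Variables (G : Type) (mul : G -> G -> G) (e : G) (inv : G -> G).

Definition word_prod (w : list G) : G := fold_right mul e w.

Definition letter (S : list G) (a : G) : Prop := In a S \/ exists s, In s S /\ a = inv s.

Definition in_ball_power (S : list G) (n : nat) (x : G) : Prop :=
  exists w : list G, length w = n /\ Forall (letter S) w /\ word_prod w = x.

Definition generates (S : list G) : Prop := forall g, exists n, in_ball_power S n g.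

Definition finitely_generated : Prop := exists S, generates S.

(* d_S(g,h) <= N, where d_S(g,h) = min { n | g^{-1} h ∈ (S ∪ S^{-1})^n } *)
Definition word_dist_le (S : list G) (g h : G) (N : nat) : Prop :=
  exists n, n <= N /\ in_ball_power S n (mul (inv g) h).

Definition right_Z_action (act : G -> Z -> G) : Prop :=
  (forall x, act x 0%Z = x) /\ (forall x m n, act (act x m) n = act x (m + n)%Z).

Definition free_action (act : G -> Z -> G) : Prop :=
  forall x h, act x h = x -> h = 0%Z.

Definition transitive_action (act : G -> Z -> G) : Prop :=
  forall x y, exists h, act x h = y.

Definition translation_like (S : list G) (act : G -> Z -> G) : Prop :=
  right_Z_action act /\ free_action act /\
  forall h, exists N, forall x, word_dist_le S x (act x h) N.

Definition cayley_adj (S : list G) (g h : G) : Prop :=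
  exists s, In s S /\ (h = mul g s \/ h = mul g (inv s)).

Definition bi_infinite_hamiltonian_path (S : list G) (P : Z -> G) : Prop :=
  (forall i j, P i = P j -> i = j) /\ (forall g, exists i, P i = g) /\
  (forall i, cayley_adj S (P i) (P (i + 1)%Z)).

End Group.

(* Main.v *)
Require Import Defs.
From Stdlib Require Import ZArith List Lia ClassicalEpsilon.
Import ListNotations.
Set Implicit Arguments.

Lemma g_inv_uniq (G : Type) (mul : G -> G -> G) (e : G) (inv : G -> G)
  (Hg : is_group mul e inv) a b : mul a b = e -> b = inv a.
Proof.
  destruct Hg as (As & L & R & IL & IR). intro H.
  rewrite <- (L b), <- (IL a), <- As, H, R. reflexivity.
Qed.

Lemma g_inv_inv (G : Type) (mul : G -> G -> G) (e : G) (inv : G -> G)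
  (Hg : is_group mul e inv) a : inv (inv a) = a.
Proof.
  symmetry. apply (g_inv_uniq Hg). destruct Hg as (As & L & R & IL & IR). apply IL.
Qed.

Lemma g_inv_mul (G : Type) (mul : G -> G -> G) (e : G) (inv : G -> G)
  (Hg : is_group mul e inv) a b : inv (mul a b) = mul (inv b) (inv a).
Proof.
  symmetry. apply (g_inv_uniq Hg). pose proof Hg as Hg'.
  destruct Hg' as (As & L & R & IL & IR).
  rewrite <- As, (As b), IR, L, IR. reflexivity.
Qed.

Lemma g_inv_e (G : Type) (mul : G -> G -> G) (e : G) (inv : G -> G)
  (Hg : is_group mul e inv) : inv e = e.
Proof.
  destruct Hg as (As & L & R & IL & IR). rewrite <- (R (inv e)). apply IL.
Qed.

Lemma wp_app (G : Type) (mul : G -> G -> G) (e : G) (inv : G -> G)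
  (Hg : is_group mul e inv) w1 w2 :
  word_prod mul e (w1 ++ w2) = mul (word_prod mul e w1) (word_prod mul e w2).
Proof.
  destruct Hg as (As & L & R & IL & IR).
  induction w1; simpl. now rewrite L. rewrite IHw1, As. reflexivity.
Qed.

Lemma wp_inv (G : Type) (mul : G -> G -> G) (e : G) (inv : G -> G)
  (Hg : is_group mul e inv) w :
  word_prod mul e (rev (map inv w)) = inv (word_prod mul e w).
Proof.
  induction w; simpl. symmetry; apply (g_inv_e Hg).
  rewrite (wp_app Hg), IHw, (g_inv_mul Hg). simpl.
  destruct Hg as (As & L & R & IL & IR). now rewrite R.
Qed.

Definition Rb (G : Type) (mul : G -> G -> G) (e : G) (inv : G -> G) S0 (g : G) N :=
  exists n, n <= N /\ in_ball_power mul e inv S0 n g.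

Lemma Rb_mono (G : Type) (mul : G -> G -> G) (e : G) (inv : G -> G) S0 g N M :
  N <= M -> Rb mul e inv S0 g N -> Rb mul e inv S0 g M.
Proof. intros H (n & Hn & Hb). exists n; split; [lia|exact Hb]. Qed.

Lemma Rb_mul (G : Type) (mul : G -> G -> G) (e : G) (inv : G -> G)
  (Hg : is_group mul e inv) S0 a b N M :
  Rb mul e inv S0 a N -> Rb mul e inv S0 b M -> Rb mul e inv S0 (mul a b) (N + M).
Proof.
  intros (n & Hn & w & Hl & Hf & Hp) (m & Hm & v & Hl' & Hf' & Hp').
  exists (n + m); split; [lia|]. exists (w ++ v); split; [rewrite length_app; lia|].
  split; [apply Forall_app; auto|]. rewrite (wp_app Hg); congruence.
Qed.

Lemma Rb_inv (G : Type) (mul : G -> G -> G) (e : G) (inv : G -> G)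
  (Hg : is_group mul e inv) S0 a N :
  Rb mul e inv S0 a N -> Rb mul e inv S0 (inv a) N.
Proof.
  intros (n & Hn & w & Hl & Hf & Hp). exists n; split; [exact Hn|].
  exists (rev (map inv w)); split; [rewrite length_rev, length_map; auto|].
  split; [|rewrite (wp_inv Hg); congruence].
  apply Forall_rev. apply Forall_map. eapply Forall_impl; [|exact Hf].
  intros x [Hx | (s & Hs & ->)].
  - right. exists x; auto.
  - left. now rewrite (g_inv_inv Hg).
Qed.

Lemma Rb_list (G : Type) (mul : G -> G -> G) (e : G) (inv : G -> G)
  S0 (HS0 : generates mul e inv S0) (S : list G) :
  exists M, forall s, In s S -> Rb mul e inv S0 s M.
Proof.
  induction S as [|a S IH]. exists 0; intros s [].
  destruct IH as (M & HM). destruct (HS0 a) as (n & Hn).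
  exists (max n M). intros s [<- | Hs].
  - exists n; split; [lia|exact Hn].
  - eapply Rb_mono; [|apply HM; exact Hs]. lia.
Qed.

Fixpoint words (G : Type) (A : list G) (n : nat) : list (list G) :=
  match n with
  | 0 => [[]]
  | S n => flat_map (fun a => map (cons a) (words A n)) A
  end.

Lemma words_in (G : Type) (A : list G) w :
  Forall (fun a => In a A) w -> In w (words A (length w)).
Proof.
  induction w as [|a w IH]; intro H; simpl. auto.
  inversion H; subst. apply in_flat_map. exists a; split; auto.
  apply in_map. auto.
Qed.

Lemma forward (G : Type) (mul : G -> G -> G) (e : G) (inv : G -> G)
  (Hgrp : is_group mul e inv) (S0 : list G) (HS0 : generates mul e inv S0) :
  (exists act : G -> Z -> G,
      translation_like mul e inv S0 act /\ transitive_action act) ->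
  (exists S : list G, generates mul e inv S /\
      exists P : Z -> G, bi_infinite_hamiltonian_path mul inv S P).
Proof.
  intros (act & ((H0 & Hc) & Hfree & Htl) & Htr).
  destruct (Htl 1%Z) as (N & HN).
  set (A := S0 ++ map inv S0).
  exists (S0 ++ flat_map (fun n => map (word_prod mul e) (words A n)) (seq 0 (S N))).
  split.
  - intro g. destruct (HS0 g) as (n & w & Hl & Hf & Hp). exists n, w.
    split; auto. split; auto. eapply Forall_impl; [|exact Hf].
    intros a [Ha | (s & Hs & ->)]; [left | right; exists s; split]; auto;
      apply in_or_app; auto.
  - exists (fun i => act e i). split; [|split].
    + intros i j Hij. assert (act (act e i) (j - i)%Z = act e i) as Hx.
      { rewrite Hc. replace (i + (j - i))%Z with j by lia. auto. }
      apply Hfree in Hx. lia.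
    + intro g. destruct (Htr e g) as (h & Hh). eauto.
    + intro i. specialize (HN (act e i)). rewrite Hc in HN.
      destruct HN as (n & Hn & w & Hl & Hf & Hp).
      exists (mul (inv (act e i)) (act e (i + 1)%Z)). split.
      * apply in_or_app; right. apply in_flat_map. exists n. split.
        -- apply in_seq. lia.
        -- rewrite <- Hp. apply in_map. rewrite <- Hl. apply words_in.
           eapply Forall_impl; [|exact Hf]. intros a [Ha | (s & Hs & ->)];
             apply in_or_app; [left|right]; auto. apply in_map; auto.
      * left. destruct Hgrp as (As & L & R & IL & IR).
        rewrite As, IR, L. reflexivity.
Qed.

Lemma backward (G : Type) (mul : G -> G -> G) (e : G) (inv : G -> G)
  (Hgrp : is_group mul e inv) (S0 : list G) (HS0 : generates mul e inv S0) :
  (exists S : list G, generates mul e inv S /\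
      exists P : Z -> G, bi_infinite_hamiltonian_path mul inv S P) ->
  (exists act : G -> Z -> G,
      translation_like mul e inv S0 act /\ transitive_action act).
Proof.
  intros (S & _ & P & Hinj & Hsur & Hadj).
  pose (idx := fun g => proj1_sig (constructive_indefinite_description _ (Hsur g))).
  assert (Hidx : forall g, P (idx g) = g).
  { intro g. unfold idx. destruct (constructive_indefinite_description _ _); auto. }
  assert (HidxP : forall k, idx (P k) = k) by (intro k; apply Hinj, Hidx).
  destruct (Rb_list HS0 S) as (M & HM).
  assert (Hstep : forall i, Rb mul e inv S0 (mul (inv (P i)) (P (i + 1)%Z)) M).
  { intro i. destruct (Hadj i) as (s & Hs & [Hq | Hq]); rewrite Hq;
      pose proof Hgrp as (As & L & R & IL & IR);
      rewrite As, IL, L; [|apply (Rb_inv Hgrp)]; auto. }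
  assert (Hpos : forall n k, Rb mul e inv S0 (mul (inv (P k)) (P (k + Z.of_nat n)%Z)) (M * n)).
  { induction n; intro k.
    - replace (k + Z.of_nat 0)%Z with k by lia.
      pose proof Hgrp as (As & L & R & IL & IR). rewrite IL.
      exists 0; split; [lia|]. exists []; repeat split; auto.
    - replace (M * Datatypes.S n) with (M * n + M) by lia.
      replace (mul (inv (P k)) (P (k + Z.of_nat (Datatypes.S n))%Z)) with
        (mul (mul (inv (P k)) (P (k + Z.of_nat n)%Z))
             (mul (inv (P (k + Z.of_nat n)%Z)) (P (k + Z.of_nat n + 1)%Z))).
      + apply (Rb_mul Hgrp); auto.
      + replace (k + Z.of_nat (Datatypes.S n))%Z with (k + Z.of_nat n + 1)%Z by lia.
        pose proof Hgrp as (As & L & R & IL & IR).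
        rewrite <- As, (As (P _)), IR, L. reflexivity. }
  exists (fun x n => P (idx x + n)%Z). split; [split; [split|split]|].
  - intro x. rewrite Z.add_0_r. auto.
  - intros x m n. rewrite HidxP, Z.add_assoc. reflexivity.
  - intros x h H. rewrite <- (Hidx x) in H at 2. apply Hinj in H. lia.
  - intro h. exists (M * Z.abs_nat h). intros x. unfold word_dist_le.
    change (Rb mul e inv S0 (mul (inv x) (P (idx x + h)%Z)) (M * Z.abs_nat h)).
    rewrite <- (Hidx x) at 1. set (k := idx x).
    destruct (Z_le_gt_dec 0 h).
    + pose proof (Hpos (Z.abs_nat h) k) as Hq. replace (k + Z.of_nat (Z.abs_nat h))%Z with (k + h)%Z in Hq by lia. exact Hq.
    + pose proof (Hpos (Z.abs_nat h) (k + h)%Z) as Hq.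
      replace (k + h + Z.of_nat (Z.abs_nat h))%Z with k in Hq by lia.
      apply (Rb_inv Hgrp) in Hq. rewrite (g_inv_mul Hgrp), (g_inv_inv Hgrp) in Hq.
      exact Hq.
  - intros x y. exists (idx y - idx x)%Z. rewrite <- Hidx. f_equal. lia.
Qed.

Theorem corollary3p2 (G : Type) (mul : G -> G -> G) (e : G) (inv : G -> G)
  (Hgrp : is_group mul e inv) (S0 : list G) (HS0 : generates mul e inv S0) :
  (exists act : G -> Z -> G,
      translation_like mul e inv S0 act /\ transitive_action act) <->
  (exists S : list G, generates mul e inv S /\
      exists P : Z -> G, bi_infinite_hamiltonian_path mul inv S P).
Proof.
  split; [apply forward | apply backward]; auto.
Qed.
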